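(* Let $X$ be a finitely supported subset of an invariant set $U$. (8) $\wp_{fs}(X)$ is FSM Dedekind infinite if and only if $X$ is FSM ascending infinite. (9) If $X$ is FSM Dedekind infinite, then $X$ is FSM ascending infinite; the converse fails, since $\wp_{fin}(A)$ is FSM ascending infinite but not FSM Dedekind infinite.
   Context: Framework (FSM). Work in ZF with a fixed infinite set $A$ of atoms; $S_A$ is the group of bijections of $A$ fixing all but finitely many atoms; $Fix(S)$ is the set of $\pi\in S_A$ fixing each element of $S\subseteq A$; $S$ supports $x$ if $\pi\cdot x=x$ for all $\pi\in Fix(S)$. An invariant set is an $S_A$-set all of whose elements have finite supports; subsets carry $\pi\star Z=\{\pi\cdot z:z\in Z\}$; $\wp_{fs}(X)$ is the set of subsets of $U$ contained in $X$ that are finitely supported under $\star$, and $\wp_{fin}(A)$ is the set of finite subsets of $A$. $\mathbb N$ carries the trivial action. A function is finitely supported if there is a finite $S$ such that for all $\pi\in Fix(S)$, $f(\pi\cdot x)=\pi\cdot f(x)$ and $\pi$ preserves domain and codomain. $X$ is FSM Dedekind infinite if there is a finitely supported injection from $X$ onto a finitely supported proper subset of $X$. $X$ is FSM ascending infinite if there is a sequence $(X_n)_{n\in\mathbb N}$ of finitely supported subsets of $U$ with $X_0\subseteq X_1\subseteq\cdots$, such that the map $n\mapsto X_n$ is finitely supported, $X\subseteq\bigcup_nX_n$, and there is no $n$ with $X\subseteq X_n$. *)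

(* Defs.v *)
From Stdlib Require Import List FunctionalExtensionality PropExtensionality.
Import ListNotations.
Set Implicit Arguments.

Definition infinite_atoms (Atom : Type) : Prop :=
  forall l : list Atom, exists a, ~ In a l.

Record perm (Atom : Type) := Perm {
  pf : Atom -> Atom;
  pinv : Atom -> Atom;
  pfK : forall a, pinv (pf a) = a;
  pinvK : forall a, pf (pinv a) = a;
  psupp : list Atom;
  psuppP : forall a, ~ In a psupp -> pf a = a }.

Definition pid (Atom : Type) : perm Atom :=
  @Perm Atom (fun a => a) (fun a => a) (fun a => eq_refl) (fun a => eq_refl)
        [] (fun a _ => eq_refl).

Definition pcomp (Atom : Type) (p q : perm Atom) : perm Atom.
Proof.
  refine (@Perm Atom (fun a => pf p (pf q a)) (fun a => pinv q (pinv p a))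
            _ _ (psupp p ++ psupp q) _).
  - intro a; rewrite pfK, pfK; reflexivity.
  - intro a; rewrite pinvK, pinvK; reflexivity.
  - intros a Ha. rewrite (psuppP q a), (psuppP p a); auto;
      intro H; apply Ha; apply in_or_app; auto.
Defined.

Record pset (Atom : Type) := PSet {
  carrier :> Type;
  act : perm Atom -> carrier -> carrier;
  act_id : forall x, act (pid Atom) x = x;
  act_comp : forall p q x, act (pcomp p q) x = act p (act q x) }.

Arguments act {Atom} _ _ _.

Section FSM.
Variable Atom : Type.

Definition Fix (S : list Atom) (p : perm Atom) : Prop :=
  forall a, In a S -> pf p a = a.

Definition supports (T : pset Atom) (S : list Atom) (x : T) : Prop :=
  forall p, Fix S p -> act T p x = x.
Arguments supports {T} S x.

Definition fsupp (T : pset Atom) (x : T) : Prop := exists S, @supports T S x.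
Arguments fsupp {T} x.

Definition setact (T : pset Atom) (p : perm Atom) (Z : T -> Prop) : T -> Prop :=
  fun y => exists z, Z z /\ y = act T p z.
Arguments setact {T} p Z.

Definition subset (T : Type) (Y Z : T -> Prop) : Prop := forall x, Y x -> Z x.
Definition seteq (T : Type) (Y Z : T -> Prop) : Prop := forall x, Y x <-> Z x.

Definition fs_subset (T : pset Atom) (Z : T -> Prop) : Prop :=
  exists S : list Atom, forall p, Fix S p -> seteq (setact p Z) Z.
Arguments fs_subset {T} Z.

(* An invariant set U, presented as a subset of an S_A-set T that is closed
   under the action and all of whose elements are finitely supported. *)
Definition invariant_set (T : pset Atom) (U : T -> Prop) : Prop :=
  (forall p x, U x -> U (act T p x)) /\ (forall x, U x -> fsupp x).
Arguments invariant_set {T} U.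

Lemma setact_id (T : pset Atom) (Z : T -> Prop) : setact (pid Atom) Z = Z.
Proof.
  apply functional_extensionality; intro y; apply propositional_extensionality.
  unfold setact; split.
  - intros [z [Hz ->]]; rewrite act_id; exact Hz.
  - intro Hy; exists y; rewrite act_id; auto.
Qed.

Lemma setact_comp (T : pset Atom) p q (Z : T -> Prop) :
  setact (pcomp p q) Z = setact p (setact q Z).
Proof.
  apply functional_extensionality; intro y; apply propositional_extensionality.
  unfold setact; split.
  - intros [z [Hz ->]]; exists (act T q z); split.
    + exists z; auto.
    + apply act_comp.
  - intros [w [[z [Hz ->]] ->]]; exists z; split; auto; symmetry; apply act_comp.
Qed.

Definition powset (T : pset Atom) : pset Atom :=
  @PSet Atom (T -> Prop) (@setact T) (@setact_id T) (@setact_comp T).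

Definition pfs (T : pset Atom) (X : T -> Prop) : powset T -> Prop :=
  fun Z => fs_subset Z /\ subset Z X.
Arguments pfs {T} X.

Definition atoms_pset : pset Atom :=
  @PSet Atom Atom (fun p a => pf p a) (fun a => eq_refl) (fun p q a => eq_refl).

Definition pfin : powset atoms_pset -> Prop :=
  fun Z => exists l : list Atom, forall a, Z a <-> In a l.

(* finitely supported function from X to Y (f is given as a function on the
   ambient S_A-sets; only its values on X matter) *)
Definition fs_fun (T T' : pset Atom) (X : T -> Prop) (Y : T' -> Prop)
  (f : T -> T') : Prop :=
  exists S : list Atom, forall p, Fix S p ->
    seteq (setact p X) X /\ seteq (setact p Y) Y /\
    (forall x, X x -> f (act T p x) = act T' p (f x)).
Arguments fs_fun {T T'} X Y f.

Definition fsm_dedekind_infinite (T : pset Atom) (X : T -> Prop) : Prop :=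
  exists (Y : T -> Prop) (f : T -> T),
    fs_subset Y /\ subset Y X /\ (exists x, X x /\ ~ Y x) /\
    (forall x, X x -> Y (f x)) /\
    (forall x1 x2, X x1 -> X x2 -> f x1 = f x2 -> x1 = x2) /\
    (forall y, Y y -> exists x, X x /\ f x = y) /\
    fs_fun X Y f.
Arguments fsm_dedekind_infinite {T} X.

(* FSM ascending infinite (relative to the invariant set U; N carries the
   trivial action, so n |-> X_n is finitely supported iff some S supports
   every X_n) *)
Definition fsm_ascending_infinite (T : pset Atom) (U X : T -> Prop) : Prop :=
  exists Xs : nat -> (T -> Prop),
    (forall n, subset (Xs n) U) /\
    (forall n, fs_subset (Xs n)) /\
    (forall n, subset (Xs n) (Xs (S n))) /\
    (exists S : list Atom, forall p, Fix S p ->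
        forall n, seteq (setact p (Xs n)) (Xs n)) /\
    subset X (fun x => exists n, Xs n x) /\
    ~ (exists n, subset X (Xs n)).
Arguments fsm_ascending_infinite {T} U X.

End FSM.

Arguments supports {Atom T} S x.
Arguments fsupp {Atom T} x.
Arguments setact {Atom T} p Z.
Arguments fs_subset {Atom T} Z.
Arguments invariant_set {Atom T} U.
Arguments pfs {Atom T} X.
Arguments fs_fun {Atom T T'} X Y f.
Arguments fsm_dedekind_infinite {Atom T} X.
Arguments fsm_ascending_infinite {Atom T} U X.
Arguments Fix {Atom} S p.

Arguments subset {T} Y Z.
Arguments seteq {T} Y Z.

(* Main.v *)
Require Import Defs.
From Stdlib Require Import List Arith Lia Classical ClassicalEpsilon FunctionalExtensionality PropExtensionality.
Import ListNotations.
Set Implicit Arguments.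

Section Gen.
Variable Atom : Type.

Definition pinvp (p : perm Atom) : perm Atom.
Proof.
  refine (@Perm Atom (pinv p) (pf p) (pinvK p) (pfK p) (psupp p) _).
  intros a Ha. pose proof (pfK p a) as H. rewrite (psuppP p a Ha) in H. exact H.
Defined.

Lemma Fix_inv (S : list Atom) p : Fix S p -> Fix S (pinvp p).
Proof.
  intros H a Ha. simpl. pose proof (pfK p a) as H2. rewrite (H a Ha) in H2. exact H2.
Qed.

Lemma Fix_app_l (S1 S2 : list Atom) p : Fix (S1 ++ S2) p -> Fix S1 p.
Proof. intros H a Ha; apply H; apply in_or_app; auto. Qed.
Lemma Fix_app_r (S1 S2 : list Atom) p : Fix (S1 ++ S2) p -> Fix S2 p.
Proof. intros H a Ha; apply H; apply in_or_app; auto. Qed.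

Lemma idlike_act (T : pset Atom) (e : perm Atom) (u : T) :
  fsupp u -> (forall a, pf e a = a) -> act T e u = u.
Proof. intros [S HS] He. apply HS. intros a _. apply He. Qed.

Lemma seteq_eq (T : Type) (A B : T -> Prop) : seteq A B -> A = B.
Proof. intro H. apply functional_extensionality; intro x; apply propositional_extensionality; apply H. Qed.

Lemma subset_antisym (T : Type) (A B : T -> Prop) : subset A B -> subset B A -> A = B.
Proof. intros H1 H2. apply seteq_eq. intro x; split; auto. Qed.

Section U.
Variables (T : pset Atom) (U : T -> Prop).
Hypothesis HU : invariant_set U.

Lemma U_act p x : U x -> U (act T p x).
Proof. intro; apply (proj1 HU); auto. Qed.

Lemma act_inv_l p u : U u -> act T (pinvp p) (act T p u) = u.
Proof.
  intro Hu. rewrite <- act_comp. apply idlike_act. apply (proj2 HU); auto.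
  intro a; simpl; apply pfK.
Qed.

Lemma act_inv_r p u : U u -> act T p (act T (pinvp p) u) = u.
Proof.
  intro Hu. rewrite <- act_comp. apply idlike_act. apply (proj2 HU); auto.
  intro a; simpl; apply pinvK.
Qed.

Lemma act_inj p x y : U x -> U y -> act T p x = act T p y -> x = y.
Proof.
  intros Hx Hy H. rewrite <- (act_inv_l p Hx), <- (act_inv_l p Hy), H. reflexivity.
Qed.

Lemma act_ext p q u : U u -> (forall a, pf p a = pf q a) -> act T p u = act T q u.
Proof.
  intros Hu Hpq.
  rewrite <- (act_inv_r q (U_act p Hu)).
  f_equal. rewrite <- act_comp. apply idlike_act. apply (proj2 HU); auto.
  intro a; simpl. rewrite Hpq. apply pfK.
Qed.

Lemma mem_fwd p (Z : T -> Prop) x :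
  subset Z U -> seteq (setact p Z) Z -> U x -> (Z (act T p x) <-> Z x).
Proof.
  intros HZ Hs Hx; split; intro H.
  - apply Hs in H. destruct H as [z [Hz E]].
    apply act_inj in E; auto. subst; auto.
  - apply Hs. exists x; auto.
Qed.

Lemma mem_fwd_eq p (Z : T -> Prop) x :
  subset Z U -> setact p Z = Z -> U x -> (Z (act T p x) <-> Z x).
Proof. intros HZ E Hx. apply mem_fwd; auto. rewrite E. intro; tauto. Qed.

Lemma mem_bwd p (Z : T -> Prop) :
  subset Z U -> (forall x, U x -> (Z (act T p x) <-> Z x)) -> seteq (setact p Z) Z.
Proof.
  intros HZ H y; split.
  - intros [z [Hz ->]]. apply H; auto.
  - intro Hy. exists (act T (pinvp p) y). split.
    + apply H. apply U_act; auto. rewrite act_inv_r; auto.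
    + rewrite act_inv_r; auto.
Qed.

Lemma setact_inv_l p (Z : T -> Prop) : subset Z U -> setact (pinvp p) (setact p Z) = Z.
Proof.
  intro HZ. apply seteq_eq; intro y; split.
  - intros [w [[z [Hz ->]] ->]]. rewrite act_inv_l; auto.
  - intro Hy. exists (act T p y); split. exists y; auto. rewrite act_inv_l; auto.
Qed.

Lemma setact_inv_r p (Z : T -> Prop) : subset Z U -> setact p (setact (pinvp p) Z) = Z.
Proof.
  intro HZ. apply seteq_eq; intro y; split.
  - intros [w [[z [Hz ->]] ->]]. rewrite act_inv_r; auto.
  - intro Hy. exists (act T (pinvp p) y); split. exists y; auto. rewrite act_inv_r; auto.
Qed.

Lemma setact_ext p q (Z : T -> Prop) : subset Z U -> (forall a, pf p a = pf q a) ->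
  setact p Z = setact q Z.
Proof.
  intros HZ H. apply seteq_eq; intro y; split; intros [z [Hz ->]]; exists z; split; auto;
  apply act_ext; auto.
Qed.

Lemma fs_setact p (Z : T -> Prop) : subset Z U -> fs_subset Z -> fs_subset (setact p Z).
Proof.
  intros HZ [S HS]. exists (map (pf p) S). intros q Hq.
  set (r := pcomp (pinvp p) (pcomp q p)).
  assert (Hr : Fix S r).
  { intros a Ha. simpl. rewrite (Hq (pf p a)). apply pfK. apply in_map; auto. }
  rewrite <- setact_comp.
  rewrite (setact_ext (pcomp q p) (pcomp p r) HZ).
  2: { intro a; simpl. rewrite pinvK. reflexivity. }
  rewrite setact_comp. rewrite (seteq_eq (HS r Hr)). intro; tauto.
Qed.

Lemma pfs_act (X : T -> Prop) SX p Z :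
  subset X U -> (forall p, Fix SX p -> seteq (setact p X) X) -> Fix SX p ->
  pfs X Z -> pfs X (setact p Z).
Proof.
  intros HXU HSX Hp [HZ1 HZ2]. split.
  - apply fs_setact; auto. intros x Hx; auto.
  - intros y [z [Hz ->]]. apply (mem_fwd HXU (HSX p Hp)); auto.
Qed.

Lemma pfs_inv (X : T -> Prop) SX p :
  subset X U -> (forall p, Fix SX p -> seteq (setact p X) X) -> Fix SX p ->
  seteq (@setact Atom (powset T) p (pfs X)) (pfs X).
Proof.
  intros HXU HSX Hp W; split.
  - intros [Z [HZ ->]]. apply pfs_act with SX; auto.
  - intro HW. exists (setact (pinvp p) W). split.
    + apply pfs_act with SX; auto. apply Fix_inv; auto.
    + simpl. rewrite setact_inv_r; auto. intros x Hx. apply HXU, HW; auto.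
Qed.

Lemma asc_from_seq (X : T -> Prop) (xs : nat -> T) (E : T -> T -> Prop) (S : list Atom) :
  subset X U -> fs_subset X -> (forall k, X (xs k)) -> (forall k, E (xs k) (xs k)) ->
  (forall x i j, E x (xs i) -> E x (xs j) -> i = j) ->
  (forall p, Fix S p -> forall x k, U x -> (E (act T p x) (xs k) <-> E x (xs k))) ->
  fsm_ascending_infinite U X.
Proof.
  intros HXU [SX HSX] Hxs HE Huniq Hinv.
  assert (Hsupp : forall p, Fix (S ++ SX) p -> forall n,
     seteq (setact p (fun x => X x /\ forall k, n < k -> ~ E x (xs k)))
           (fun x => X x /\ forall k, n < k -> ~ E x (xs k))).
  { intros p Hp n. apply mem_bwd.
    - intros x [Hx _]; auto.
    - intros x Hx. rewrite (mem_fwd HXU (HSX p (Fix_app_r _ _ Hp)) Hx).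
      split; intros [H1 H2]; split; auto; intros k Hk; specialize (H2 k Hk);
      rewrite (Hinv p (Fix_app_l _ _ Hp) x k Hx) in *; auto. }
  exists (fun n x => X x /\ forall k, n < k -> ~ E x (xs k)).
  split; [|split; [|split; [|split; [|split]]]].
  - intros n x [Hx _]; auto.
  - intro n. exists (S ++ SX). intros p Hp; apply Hsupp; auto.
  - intros n x [Hx H]; split; auto; intros k Hk; apply H; lia.
  - exists (S ++ SX); auto.
  - intros x Hx. destruct (classic (exists k, E x (xs k))) as [[k Hk]|N].
    + exists k; split; auto. intros k' Hk' He. specialize (Huniq x k k' Hk He). lia.
    + exists 0; split; auto. intros k _ He; apply N; eauto.
  - intros [n Hn]. destruct (Hn (xs (Datatypes.S n)) (Hxs _)) as [_ H].
    apply (H (Datatypes.S n)); auto.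
Qed.

End U.
End Gen.

Lemma iter_P {A} (P Q : A -> Prop) (f : A -> A) a0 :
  P a0 -> (forall a, P a -> Q (f a)) -> (forall a, Q a -> P a) ->
  forall k, P (Nat.iter k f a0).
Proof. intros H0 H1 H2 k; induction k; simpl; auto. Qed.

Lemma iter_inj {A} (P Q : A -> Prop) (f : A -> A) a0 :
  P a0 -> ~ Q a0 -> (forall a, P a -> Q (f a)) -> (forall a, Q a -> P a) ->
  (forall a b, P a -> P b -> f a = f b -> a = b) ->
  forall i j, Nat.iter i f a0 = Nat.iter j f a0 -> i = j.
Proof.
  intros H0 HQ H1 H2 Hinj i. induction i; intros j; destruct j; simpl; intro E; auto.
  - exfalso; apply HQ; rewrite E; apply H1, (iter_P P Q); auto.
  - exfalso; apply HQ; rewrite <- E; apply H1, (iter_P P Q); auto.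
  - f_equal; apply IHi. apply Hinj; auto; apply (iter_P P Q); auto.
Qed.

Section P9.
Variable Atom : Type.

Lemma part9a (T : pset Atom) (U X : T -> Prop) :
  invariant_set U -> subset X U -> fs_subset X ->
  fsm_dedekind_infinite X -> fsm_ascending_infinite U X.
Proof.
  intros HU HXU HX [Y [f [HYfs [HYX [[x0 [Hx0 Hnx0]] [Hmap [Hinj [Hsurj [Sf HSf]]]]]]]]].
  destruct (proj2 HU x0 (HXU x0 Hx0)) as [S0 HS0].
  set (xs := fun k => Nat.iter k f x0).
  assert (HxsX : forall k, X (xs k)).
  { intro k. apply (iter_P X Y); auto. }
  assert (Hxinj : forall i j, xs i = xs j -> i = j).
  { apply (iter_inj X Y); auto. }
  assert (Hsupp : forall p, Fix (Sf ++ S0) p -> forall k, act T p (xs k) = xs k).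
  { intros p Hp k. induction k.
    - apply HS0. eapply Fix_app_r; eauto.
    - change (act T p (f (xs k)) = f (xs k)).
      destruct (HSf p (Fix_app_l _ _ Hp)) as [_ [_ H]].
      rewrite <- H; auto. rewrite IHk; auto. }
  apply (asc_from_seq HU xs (fun x y => x = y) (S:=Sf ++ S0)); auto.
  - intros x i j -> E; auto.
  - intros p Hp x k Hx. split; intro E.
    + rewrite <- (Hsupp p Hp k) in E. apply (act_inj HU) in E; auto.
    + subst; auto.
Qed.

Lemma php (T : Type) (P : nat -> T -> Prop) (L : list T) :
  forall K : list nat, NoDup K -> 2 ^ length L < length K ->
  exists i j, In i K /\ In j K /\ i <> j /\ forall l, In l L -> (P i l <-> P j l).
Proof.
  induction L as [|a L IH]; intros K HK Hlen.
  - destruct K as [|i [|j K]]; simpl in Hlen; try lia.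
    exists i, j. inversion HK; subst. split; [left; auto|split; [right; left; auto|split]].
    + intro E; subst; apply H1; left; auto.
    + intros l [].
  - set (g := fun k => if excluded_middle_informative (P k a) then true else false).
    pose proof (filter_length g K) as HL. simpl in Hlen.
    destruct (Nat.lt_ge_cases (2 ^ length L) (length (filter g K))) as [H1|H1].
    + destruct (IH (filter g K) (NoDup_filter g HK) H1) as [i [j [Hi [Hj [Hij Hl]]]]].
      apply filter_In in Hi, Hj. destruct Hi as [Hi Gi], Hj as [Hj Gj].
      exists i, j; split; [|split; [|split]]; auto.
      intros l0 [<-|Hl']; [|apply Hl; auto].
      unfold g in Gi, Gj. destruct (excluded_middle_informative (P i a)); try discriminate;
      destruct (excluded_middle_informative (P j a)); try discriminate; tauto.
    + assert (H2 : 2 ^ length L < length (filter (fun x => negb (g x)) K)) by lia.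
      destruct (IH _ (NoDup_filter _ HK) H2) as [i [j [Hi [Hj [Hij Hl]]]]].
      apply filter_In in Hi, Hj. destruct Hi as [Hi Gi], Hj as [Hj Gj].
      exists i, j; split; [|split; [|split]]; auto.
      intros l0 [<-|Hl']; [|apply Hl; auto].
      unfold g in Gi, Gj. destruct (excluded_middle_informative (P i a)); try discriminate;
      destruct (excluded_middle_informative (P j a)); try discriminate; tauto.
Qed.

Lemma part8a (T : pset Atom) (U X : T -> Prop) :
  invariant_set U -> subset X U -> fs_subset X ->
  fsm_dedekind_infinite (pfs X) -> fsm_ascending_infinite U X.
Proof.
  intros HU HXU HX [Y [f [HYfs [HYX [[Z0 [HZ0 HnZ0]] [Hmap [Hinj [Hsurj [Sf HSf]]]]]]]]].
  destruct (proj1 HZ0) as [S0 HS0].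
  set (Zs := fun k => Nat.iter k f Z0).
  assert (HZs : forall k, pfs X (Zs k)).
  { intro k. apply (iter_P (pfs X) Y); auto. }
  assert (HZU : forall k, subset (Zs k) U).
  { intros k x Hx. apply HXU, (proj2 (HZs k)); auto. }
  assert (HZinj : forall i j, Zs i = Zs j -> i = j).
  { apply (iter_inj (pfs X) Y); auto. }
  assert (Hsupp : forall p, Fix (Sf ++ S0) p -> forall k, setact p (Zs k) = Zs k).
  { intros p Hp k. induction k.
    - apply seteq_eq. apply HS0. eapply Fix_app_r; eauto.
    - change (setact p (f (Zs k)) = f (Zs k)).
      destruct (HSf p (Fix_app_l _ _ Hp)) as [_ [_ H]].
      specialize (H (Zs k) (HZs k)). simpl in H. rewrite <- H. rewrite IHk; auto. }
  set (E := fun x y : T => forall i, Zs i x <-> Zs i y).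
  assert (Hnew : forall L : list T, exists x, X x /\ forall l, In l L -> ~ E x l).
  { intro L. apply NNPP. intro N.
    assert (Hcov : forall x, X x -> exists l, In l L /\ E x l).
    { intros x Hx. apply NNPP; intro N2. apply N. exists x. split; auto.
      intros l Hl HE. apply N2; eauto. }
    destruct (php Zs L (K:=seq 0 (Datatypes.S (2 ^ length L))) (seq_NoDup _ _))
      as [i [j [_ [_ [Hij Hl]]]]].
    { rewrite length_seq; lia. }
    apply Hij, HZinj. apply subset_antisym; intros x Hx.
    - assert (HxX : X x) by (apply (proj2 (HZs i)); auto).
      destruct (Hcov x HxX) as [l [HlL Hel]]. apply Hel, Hl, Hel; auto.
    - assert (HxX : X x) by (apply (proj2 (HZs j)); auto).
      destruct (Hcov x HxX) as [l [HlL Hel]]. apply Hel, Hl, Hel; auto. }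
  set (choose := fun L => proj1_sig (constructive_indefinite_description _ (Hnew L))).
  assert (Hch : forall L, X (choose L) /\ forall l, In l L -> ~ E (choose L) l).
  { intro L. exact (proj2_sig (constructive_indefinite_description _ (Hnew L))). }
  set (build := fix build n := match n with 0 => [] | Datatypes.S n => choose (build n) :: build n end).
  set (xs := fun n => choose (build n)).
  assert (Hin : forall i n, i < n -> In (xs i) (build n)).
  { intros i n; induction n; intro Hi; [lia|]. simpl.
    destruct (Nat.eq_dec i n); [left; subst; auto|right; apply IHn; lia]. }
  apply (asc_from_seq HU xs E (S:=Sf ++ S0)); auto.
  - intro k; apply Hch.
  - intros k i; tauto.
  - intros x i j Hi Hj. destruct (Nat.lt_trichotomy i j) as [H|[H|H]]; auto; exfalso.
    + apply ((proj2 (Hch (build j))) (xs i) (Hin _ _ H)).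
      intro m. pose proof (Hi m); pose proof (Hj m); unfold xs in *; tauto.
    + apply ((proj2 (Hch (build i))) (xs j) (Hin _ _ H)).
      intro m. pose proof (Hi m); pose proof (Hj m); unfold xs in *; tauto.
  - intros p Hp x k Hx. unfold E.
    split; intros H i; specialize (H i);
      rewrite (@mem_fwd_eq _ _ _ HU p (Zs i) x (HZU i) (Hsupp p Hp i) Hx) in *; auto.
Qed.

End P9.

Lemma least_nat (Q : nat -> Prop) : forall n, Q n -> exists k, Q k /\ forall j, Q j -> k <= j.
Proof.
  intro n. induction n using lt_wf_ind. intro Hn.
  destruct (classic (exists j, j < n /\ Q j)) as [[j [Hj Qj]]|N].
  - apply (H j Hj Qj).
  - exists n; split; auto. intros j Qj. destruct (Nat.lt_ge_cases j n); auto.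
    exfalso; apply N; eauto.
Qed.

Section P8b.
Variable Atom : Type.

Lemma part8b (T : pset Atom) (U X : T -> Prop) :
  invariant_set U -> subset X U -> fs_subset X ->
  fsm_ascending_infinite U X -> fsm_dedekind_infinite (pfs X).
Proof.
  intros HU HXU [SX HSX] [Xs [HXsU [HXsfs [Hmono [[S0 HS0] [Hcov Hns]]]]]].
  set (C := fun n x => X x /\ Xs n x).
  assert (HCU : forall n, subset (C n) U) by (intros n x [Hx _]; auto).
  assert (HCinv : forall p, Fix (S0 ++ SX) p -> forall n, setact p (C n) = C n).
  { intros p Hp n. apply seteq_eq. apply (mem_bwd HU p); auto.
    intros x Hx. unfold C.
    rewrite (mem_fwd HU x HXU (HSX p (Fix_app_r _ _ Hp)) Hx).
    rewrite (mem_fwd HU x (HXsU n) (HS0 p (Fix_app_l _ _ Hp) n) Hx). tauto. }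
  assert (HCpfs : forall n, pfs X (C n)).
  { intro n. split.
    - exists (S0 ++ SX). intros p Hp. rewrite HCinv; auto. intro; tauto.
    - intros x [Hx _]; auto. }
  assert (HCmono : forall i j, i <= j -> subset (C i) (C j)).
  { intros i j Hij. induction Hij; intros x Hx; auto.
    destruct (IHHij x Hx) as [H1 H2]. split; auto. apply Hmono; auto. }
  assert (HCgrow : forall n, exists m, ~ subset (C m) (C n)).
  { intro n. apply NNPP; intro N. apply Hns. exists n. intros x Hx.
    destruct (Hcov x Hx) as [m Hm]. apply NNPP; intro N2. apply N. exists m.
    intro Hs. apply N2. apply (Hs x). split; auto. }
  set (strict := fun (A B : T -> Prop) => subset A B /\ A <> B).
  set (nxt := fun (Z : T -> Prop) k => strict Z (C k) /\ forall j, strict Z (C j) -> subset (C k) (C j)).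
  assert (Hnxt : forall n, exists k, nxt (C n) k).
  { intro n. destruct (HCgrow n) as [m Hm].
    assert (Qm : strict (C n) (C m)).
    { destruct (Nat.le_ge_cases n m) as [H|H].
      - split. apply HCmono; auto. intro E. apply Hm. rewrite <- E. intros x; auto.
      - exfalso. apply Hm, HCmono; auto. }
    destruct (least_nat (fun k => strict (C n) (C k)) m Qm) as [k [Hk Hmin]].
    exists k. split; [exact Hk|]. intros j Hj. apply HCmono; auto. }
  set (chain := fun Z : T -> Prop => exists n, Z = C n).
  set (F := fun Z : powset T =>
    if excluded_middle_informative (chain Z) then C (epsilon (inhabits 0) (nxt Z)) else Z).
  assert (Fch : forall Z, chain Z -> exists k, nxt Z k /\ F Z = C k).
  { intros Z HZ. unfold F. destruct (excluded_middle_informative (chain Z)); [|contradiction].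
    eexists; split; [|reflexivity]. apply epsilon_spec.
    destruct HZ as [n ->]. apply Hnxt. }
  assert (Fnch : forall Z, ~ chain Z -> F Z = Z).
  { intros Z HZ. unfold F. destruct (excluded_middle_informative (chain Z)); [contradiction|auto]. }
  assert (Fpfs : forall Z, pfs X Z -> pfs X (F Z)).
  { intros Z HZ. destruct (classic (chain Z)) as [H|H].
    - destruct (Fch Z H) as [k [_ ->]]; auto.
    - rewrite Fnch; auto. }
  assert (Feq : forall p, Fix (S0 ++ SX) p -> forall Z, pfs X Z -> F (setact p Z) = setact p (F Z)).
  { intros p Hp Z HZ. destruct (classic (chain Z)) as [H|H].
    - pose proof H as [n Hn]. rewrite Hn, HCinv; auto. rewrite <- Hn.
      destruct (Fch Z H) as [k [_ ->]]. rewrite HCinv; auto.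
    - rewrite (Fnch Z H). apply Fnch. intros [n Hn]. apply H. exists n.
      rewrite <- (setact_inv_l HU p (Z:=Z) (fun x (Hx : Z x) => HXU x (proj2 HZ x Hx))).
      rewrite Hn. apply HCinv. apply Fix_inv; auto. }
  assert (Finj : forall Z1 Z2, F Z1 = F Z2 -> Z1 = Z2).
  { assert (Hw : forall Z1 Z2 n1 n2, Z1 = C n1 -> Z2 = C n2 -> n1 <= n2 -> F Z1 = F Z2 -> Z1 = Z2).
    { intros Z1 Z2 n1 n2 H1 H2 Hle E. apply NNPP; intro Hne.
      assert (Hs : strict Z1 Z2) by (split; auto; rewrite H1, H2; apply HCmono; auto).
      destruct (Fch Z1 (ex_intro _ n1 H1)) as [k1 [[_ Hk1] E1]].
      destruct (Fch Z2 (ex_intro _ n2 H2)) as [k2 [[[Hs2 Hne2] _] E2]].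
      rewrite E1, E2 in E. apply Hne2. apply subset_antisym; auto.
      rewrite <- E. rewrite H2. apply Hk1. rewrite <- H2; auto. }
    intros Z1 Z2 E.
    destruct (classic (chain Z1)) as [H1|H1]; destruct (classic (chain Z2)) as [H2|H2].
    - destruct H1 as [n1 H1], H2 as [n2 H2]. destruct (Nat.le_ge_cases n1 n2).
      + eapply Hw; eauto.
      + symmetry; eapply Hw; eauto.
    - exfalso. apply H2. rewrite (Fnch Z2 H2) in E. destruct (Fch Z1 H1) as [k [_ Ek]].
      exists k. rewrite <- E; auto.
    - exfalso. apply H1. rewrite (Fnch Z1 H1) in E. destruct (Fch Z2 H2) as [k [_ Ek]].
      exists k. rewrite E; auto.
    - rewrite (Fnch Z1 H1), (Fnch Z2 H2) in E; auto. }
  assert (FC0 : forall Z, F Z <> C 0).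
  { intros Z E. destruct (classic (chain Z)) as [H|H].
    - destruct (Fch Z H) as [k [[[Hs Hne] _] Ek]]. destruct H as [n ->].
      apply Hne. rewrite Ek in E. rewrite E in Hs |- *. apply subset_antisym; auto.
      apply HCmono; lia.
    - rewrite (Fnch Z H) in E. apply H. exists 0; auto. }
  set (Y := fun W : powset T => exists Z, pfs X Z /\ W = F Z).
  assert (HYinv : forall p, Fix (S0 ++ SX) p -> seteq (@setact Atom (powset T) p Y) Y).
  { intros p Hp W; split.
    - intros [W' [[Z [HZ ->]] ->]]. simpl. exists (setact p Z). split.
      + apply (pfs_act HU HXU HSX (Fix_app_r _ _ Hp)); auto.
      + rewrite Feq; auto.
    - intros [Z [HZ ->]]. exists (F (setact (pinvp p) Z)). split.
      + exists (setact (pinvp p) Z); split; auto.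
        apply (pfs_act HU HXU HSX); auto. apply Fix_inv; eapply Fix_app_r; eauto.
      + simpl. rewrite <- Feq; auto.
        * rewrite (setact_inv_r HU); auto. intros x Hx; apply HXU, (proj2 HZ); auto.
        * apply (pfs_act HU HXU HSX); auto. apply Fix_inv; eapply Fix_app_r; eauto. }
  exists Y, F. split; [|split; [|split; [|split; [|split; [|split]]]]].
  - exists (S0 ++ SX); auto.
  - intros W [Z [HZ ->]]; auto.
  - exists (C 0). split; auto. intros [Z [_ E]]. apply (FC0 Z); auto.
  - intros Z HZ; exists Z; auto.
  - intros; apply Finj; auto.
  - intros W [Z [HZ ->]]; eauto.
  - exists (S0 ++ SX). intros p Hp. split; [|split].
    + apply (pfs_inv HU HXU HSX); eapply Fix_app_r; eauto.
    + apply HYinv; auto.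
    + intros Z HZ. simpl. apply Feq; auto.
Qed.
End P8b.

Section Atoms.
Variable Atom : Type.
Hypothesis HA : infinite_atoms Atom.

Definition swf (a b x : Atom) : Atom :=
  if excluded_middle_informative (x = a) then b
  else if excluded_middle_informative (x = b) then a else x.

Lemma swfK a b x : swf a b (swf a b x) = x.
Proof.
  unfold swf.
  destruct (excluded_middle_informative (x = a)); destruct (excluded_middle_informative (x = b));
  repeat (match goal with |- context [excluded_middle_informative ?P] =>
            destruct (excluded_middle_informative P) end); subst; congruence.
Qed.

Definition swp (a b : Atom) : perm Atom.
Proof.
  refine (@Perm Atom (swf a b) (swf a b) (swfK a b) (swfK a b) [a; b] _).
  intros x Hx. unfold swf.
  destruct (excluded_middle_informative (x = a)); [exfalso; apply Hx; left; auto|].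
  destruct (excluded_middle_informative (x = b)); [exfalso; apply Hx; right; left; auto|auto].
Defined.

Lemma swf_a a b : swf a b a = b.
Proof. unfold swf. destruct (excluded_middle_informative (a = a)); congruence. Qed.

Lemma swf_other a b x : x <> a -> x <> b -> swf a b x = x.
Proof. intros. unfold swf.
  destruct (excluded_middle_informative (x = a)); [congruence|].
  destruct (excluded_middle_informative (x = b)); congruence. Qed.

Lemma nodup_ex n : exists l : list Atom, NoDup l /\ length l = n.
Proof.
  induction n as [|n [l [Hl Hlen]]]. exists []; split; auto; constructor.
  destruct (HA l) as [a Ha]. exists (a :: l); split; simpl; auto. constructor; auto.
Qed.

Lemma part_asc : fsm_ascending_infinite (pfs (fun _ : atoms_pset Atom => True)) (@pfin Atom).
Proof.
  set (Xs := fun n (Z : Atom -> Prop) => exists l, length l <= n /\ forall a, Z a <-> In a l).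
  assert (Hinv : forall p n, seteq (@setact Atom (powset (atoms_pset Atom)) p (Xs n)) (Xs n)).
  { intros p n W; split.
    - intros [Z [[l [Hl HZ]] ->]]. exists (map (pf p) l). split.
      + rewrite length_map; auto.
      + intro a. simpl. unfold setact. rewrite in_map_iff. split.
        * intros [z [Hz ->]]. exists z; split; auto. apply HZ; auto.
        * intros [z [<- Hz]]. exists z; split; auto. apply HZ; auto.
    - intros [l [Hl HW]]. exists (fun a => In a (map (pinv p) l)). split.
      + exists (map (pinv p) l). split; [rewrite length_map; auto|]. intro; tauto.
      + simpl. apply seteq_eq. intro a. unfold setact. simpl. rewrite HW. split.
        * intro Ha. exists (pinv p a). split. apply in_map; auto. rewrite pinvK; auto.
        * intros [z [Hz ->]]. apply in_map_iff in Hz. destruct Hz as [y [<- Hy]].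
          rewrite pinvK; auto. }
  exists Xs. split; [|split; [|split; [|split; [|split]]]].
  - intros n Z [l [Hl HZ]]. split; [|intros x _; exact I].
    exists l. intros p Hp y. unfold setact. simpl. split.
    + intros [z [Hz ->]]. rewrite Hp; auto. apply HZ; auto.
    + intro Hy. exists y. split; auto. rewrite Hp; auto. apply HZ; auto.
  - intro n. exists []. intros p _. apply Hinv.
  - intros n Z [l [Hl HZ]]. exists l; split; auto.
  - exists []. intros p _ n. apply Hinv.
  - intros Z [l Hl]. exists (length l). exists l; split; auto.
  - intros [n Hn]. destruct (nodup_ex (S n)) as [l [Hl Hlen]].
    destruct (Hn (fun a => In a l)) as [l' [Hl' HZ]].
    + exists l. intro; tauto.
    + assert (length l <= length l'). { apply NoDup_incl_length; auto. intros a Ha; apply HZ; auto. }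
      lia.
Qed.

Fixpoint subs (l : list Atom) : list (Atom -> Prop) :=
  match l with
  | [] => [fun _ => False]
  | a :: l => subs l ++ map (fun Z x => x = a \/ Z x) (subs l)
  end.

Lemma subs_all l : forall Z : Atom -> Prop, (forall x, Z x -> In x l) -> In Z (subs l).
Proof.
  induction l as [|a l IH]; intros Z HZ; simpl.
  - left. apply seteq_eq. intro x; split; [tauto|]. intro H; apply (HZ x H).
  - set (Z' := fun x => Z x /\ x <> a).
    assert (HZ' : In Z' (subs l)).
    { apply IH. intros x [Hx Hne]. destruct (HZ x Hx); auto. congruence. }
    apply in_or_app. destruct (classic (Z a)) as [Ha|Ha].
    + right. apply in_map_iff. exists Z'; split; auto. apply seteq_eq. intro x.
      unfold Z'. split.
      * intros [->|[Hx _]]; auto.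
      * intro Hx. destruct (classic (x = a)); auto.
    + left. replace Z with Z'; auto. apply seteq_eq. intro x. unfold Z'. split.
      * intros [Hx _]; auto.
      * intro Hx; split; auto. intros ->; auto.
Qed.

Lemma subs_fin l : forall Z, In Z (subs l) -> pfin Z /\ (forall x, Z x -> In x l).
Proof.
  induction l as [|a l IH]; intros Z HZ; simpl in HZ.
  - destruct HZ as [<-|[]]. split; [exists []; intro; simpl; tauto| tauto].
  - apply in_app_or in HZ. destruct HZ as [HZ|HZ].
    + destruct (IH Z HZ) as [H1 H2]. split; auto. intros x Hx; right; auto.
    + apply in_map_iff in HZ. destruct HZ as [Z' [<- HZ']].
      destruct (IH Z' HZ') as [[l' Hl'] H2]. split.
      * exists (a :: l'). intro x. simpl. rewrite Hl'. split; intros [H|H]; auto.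
      * intros x [->|Hx]; [left; auto|right; auto].
Qed.

Lemma nodup_map_inj {A B} (f : A -> B) (l : list A) :
  NoDup l -> (forall x y, In x l -> In y l -> f x = f y -> x = y) -> NoDup (map f l).
Proof.
  induction l as [|a l IH]; intros Hl Hf; simpl; constructor.
  - inversion Hl; subst. intro Hin. apply in_map_iff in Hin. destruct Hin as [y [Ey Hy]].
    assert (y = a) by (apply Hf; simpl; auto). subst; auto.
  - inversion Hl; subst. apply IH; auto. intros; apply Hf; simpl; auto.
Qed.

Lemma part_ndi : ~ fsm_dedekind_infinite (@pfin Atom).
Proof.
  intros [Y [f [HYfs [HYsub [[Z0 [HZ0 HnZ0]] [Hmap [Hinj [Hsurj [Sf HSf]]]]]]]]].
  assert (Hkey : forall Z, pfin Z -> forall a, f Z a -> In a Sf \/ Z a).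
  { intros Z HZ a Ha. apply NNPP; intro N.
    assert (HaS : ~ In a Sf) by tauto. assert (HaZ : ~ Z a) by tauto.
    destruct HZ as [lZ HlZ]. destruct (HYsub _ (Hmap Z (ex_intro _ lZ HlZ))) as [lW HlW].
    destruct (HA (a :: Sf ++ lZ ++ lW)) as [b Hb].
    assert (Hba : b <> a) by (intro; apply Hb; left; auto).
    assert (HbS : ~ In b Sf) by (intro; apply Hb; right; apply in_or_app; auto).
    assert (HbZ : ~ In b lZ) by (intro; apply Hb; right; apply in_or_app; right; apply in_or_app; auto).
    assert (HbW : ~ In b lW) by (intro; apply Hb; right; apply in_or_app; right; apply in_or_app; auto).
    set (p := swp a b).
    assert (Hp : Fix Sf p).
    { intros c Hc. simpl. apply swf_other; intros ->; auto. }
    destruct (HSf p Hp) as [_ [_ Heq]].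
    assert (HpZ : @setact Atom (atoms_pset Atom) p Z = Z).
    { apply seteq_eq. intro y. unfold setact; simpl. split.
      - intros [z [Hz ->]]. rewrite swf_other; auto.
        + intros ->; auto.
        + intros ->. apply HbZ, HlZ; auto.
      - intro Hy. exists y. split; auto. rewrite swf_other; auto.
        + intros ->; auto.
        + intros ->. apply HbZ, HlZ; auto. }
    specialize (Heq Z (ex_intro _ lZ HlZ)). simpl in Heq. rewrite HpZ in Heq.
    apply HbW. apply HlW. rewrite Heq. exists a. split; auto. simpl. rewrite swf_a; auto. }
  destruct HZ0 as [l0 Hl0].
  set (B := Sf ++ l0).
  set (dec := fun x y : Atom -> Prop => excluded_middle_informative (x = y)).
  set (K := nodup dec (subs B)).
  assert (HK : forall Z, In Z K -> pfin Z /\ (forall x, Z x -> In x B)).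
  { intros Z HZ. apply subs_fin. apply (nodup_In dec); auto. }
  assert (Hincl : incl (map f K) K).
  { intros W HW. apply in_map_iff in HW. destruct HW as [Z [<- HZ]].
    destruct (HK Z HZ) as [HZf HZB]. apply (nodup_In dec). apply subs_all.
    intros x Hx. destruct (Hkey Z HZf x Hx) as [H|H].
    - apply in_or_app; auto.
    - apply HZB; auto. }
  assert (HND : NoDup (map f K)).
  { apply nodup_map_inj. apply NoDup_nodup. intros x y Hx Hy E.
    apply Hinj; auto; [apply (HK x Hx)|apply (HK y Hy)]. }
  assert (HKK : incl K (map f K)).
  { apply NoDup_length_incl; auto. rewrite length_map; auto. }
  assert (HZ0K : In Z0 K).
  { apply (nodup_In dec). apply subs_all. intros x Hx. apply in_or_app; right; apply Hl0; auto. }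
  apply HKK in HZ0K. apply in_map_iff in HZ0K. destruct HZ0K as [Z [E HZ]].
  apply HnZ0. rewrite <- E. apply Hmap. apply (HK Z HZ).
Qed.

End Atoms.

Theorem mainTheorem10 (Atom : Type) (HA : infinite_atoms Atom) :
  (* (8) *)
  (forall (T : pset Atom) (U X : T -> Prop),
      invariant_set U -> subset X U -> fs_subset X ->
      (fsm_dedekind_infinite (pfs X) <-> fsm_ascending_infinite U X)) /\
  (* (9), first part *)
  (forall (T : pset Atom) (U X : T -> Prop),
      invariant_set U -> subset X U -> fs_subset X ->
      fsm_dedekind_infinite X -> fsm_ascending_infinite U X) /\
  (* (9), counterexample to the converse: wp_fin(A) inside wp_fs(A) *)
  (fsm_ascending_infinite (pfs (fun _ : atoms_pset Atom => True)) (@pfin Atom) /\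
   ~ fsm_dedekind_infinite (@pfin Atom)).
Proof.
  split; [|split; [|split]].
  - intros T U X HU HXU HX. split; [apply part8a|apply part8b]; auto.
  - apply part9a.
  - apply part_asc; auto.
  - apply part_ndi; auto.
Qed.
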